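(* Let $\beta\in(1,2)$, let $\tau>0$, $n\ge 1$ an integer, and $t_k=k\tau$ for $k=0,1,\dots,n$. Suppose $v\in C^{2}[0,t_n]\cap C^{3}(0,t_n]$ with $|v'''|\in L^1(0,t_n]$, and write $v^k=v(t_k)$. Define $$b_0^{(\beta)}=\frac{1}{\Gamma(3-\beta)},\qquad b_m^{(\beta)}=\frac{1}{\Gamma(3-\beta)}\big[(m+1)^{2-\beta}-m^{2-\beta}\big],\quad m\ge 1,$$ and $$\Delta_t^{\beta}v^n=\frac{1}{\tau^{\beta}}\Big[\sum_{k=2}^{n} b_{n-k}^{(\beta)}\big(v^k-2v^{k-1}+v^{k-2}\big)+2b_{n-1}^{(\beta)}\big(v^1-v^0\big)\Big].$$ Then $${}_0^CD_t^{\beta}v(t_n)=\Delta_t^{\beta}v^n-\frac{2\,b_{n-1}^{(\beta)}}{\tau^{\beta-1}}\,v'(t_0)+R_2[v(t_n)],$$ where the remainder satisfies $$\big|R_2[v(t_n)]\big|\le \frac{9\,t_n^{2-\beta}}{\Gamma(3-\beta)}\,\max_{0\le k\le n-1}\int_0^1\big|v'''(t_k+\theta\tau)\big|\,d\theta\cdot\tau .$$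
   Context: For $\beta\in(1,2)$ and a function $v$ on $[0,T]$ with $v''$ integrable, the Caputo fractional derivative of order $\beta$ is ${}_0^CD_t^{\beta}v(t)=\frac{1}{\Gamma(2-\beta)}\int_0^t (t-s)^{1-\beta}v''(s)\,ds$. $\Gamma$ denotes the Gamma function. An empty sum (when $n=1$) is zero. *)

(* Defs.v *)
From Stdlib Require Import Reals.
From Coquelicot Require Import Coquelicot.
Open Scope R_scope.

Definition Gamma (x : R) : R :=
  RInt_gen (fun s => Rpower s (x - 1) * exp (- s)) (at_right 0) (Rbar_locally p_infty).

Definition caputo_integrand (beta : R) (v2 : R -> R) (t : R) (s : R) : R :=
  Rpower (t - s) (1 - beta) * v2 s.

(* Caputo derivative of order beta in (1,2) at t, given v2 = v'':
   1/Gamma(2-beta) * int_0^t (t-s)^(1-beta) v''(s) ds (improper at s = t). *)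
Definition caputo (beta : R) (v2 : R -> R) (t : R) : R :=
  / Gamma (2 - beta) *
  RInt_gen (caputo_integrand beta v2 t) (at_right 0) (at_left t).

Definition bcoef (beta : R) (m : nat) : R :=
  match m with
  | O => / Gamma (3 - beta)
  | S _ => / Gamma (3 - beta) *
           (Rpower (INR m + 1) (2 - beta) - Rpower (INR m) (2 - beta))
  end.

Definition Delta_op (beta tau : R) (v : R -> R) (n : nat) : R :=
  let vk := fun k : nat => v (INR k * tau) in
  / Rpower tau beta *
  (sum_n_m (fun k => bcoef beta (n - k) * (vk k - 2 * vk (k - 1)%nat + vk (k - 2)%nat)) 2 n
   + 2 * bcoef beta (n - 1) * (vk 1%nat - vk 0%nat)).

Fixpoint maxk (f : nat -> R) (m : nat) : R :=
  match m with
  | O => f O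
  | S p => Rmax (maxk f p) (f (S p))
  end.

(* int_0^1 |v3(t_k + theta tau)| d theta  (improper at theta = 0, needed for k = 0) *)
Definition Ik (tau : R) (v3 : R -> R) (k : nat) : R :=
  RInt_gen (fun th => Rabs (v3 (INR k * tau + th * tau))) (at_right 0) (at_point 1).

(* Main.v *)
Require Import Defs.
From Stdlib Require Import Reals Lra Lia.
From Coquelicot Require Import Coquelicot.
Open Scope R_scope.

Ltac rbh H := match type of H with ball ?x ?e ?y => change (Rabs (y - x) < e) in H end.
Ltac rbg := match goal with |- ball ?x ?e ?y => change (Rabs (y - x) < e) end.

Lemma lim_right_eps (H : R -> R) a l :
  (forall eps : posreal, exists d : posreal, forall x, a < x < a + d -> Rabs (H x - l) < eps) ->
  filterlim H (at_right a) (locally l).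
Proof.
intros Hd P [eps HP]. destruct (Hd eps) as [d Hd'].
exists d. intros y Hy Hay. apply HP. rbg. apply Hd'.
rbh Hy. split; [lra|]. apply Rabs_lt_between in Hy. lra.
Qed.

Lemma lim_left_eps (H : R -> R) a l :
  (forall eps : posreal, exists d : posreal, forall x, a - d < x < a -> Rabs (H x - l) < eps) ->
  filterlim H (at_left a) (locally l).
Proof.
intros Hd P [eps HP]. destruct (Hd eps) as [d Hd'].
exists d. intros y Hy Hay. apply HP. rbg. apply Hd'.
rbh Hy. split; [|lra]. apply Rabs_lt_between in Hy. lra.
Qed.

Lemma lim_inf_eps (H : R -> R) l :
  (forall eps : posreal, exists M, forall x, M < x -> Rabs (H x - l) < eps) ->
  filterlim H (Rbar_locally p_infty) (locally l).
Proof.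
intros Hd P [eps HP]. destruct (Hd eps) as [M HM].
exists M. intros y Hy. apply HP. rbg. now apply HM.
Qed.

Lemma eps_lim_right (H : R -> R) a l : filterlim H (at_right a) (locally l) ->
  forall eps : posreal, exists d : posreal, forall x, a < x < a + d -> Rabs (H x - l) < eps.
Proof.
intros Hl eps. destruct (Hl (fun y => Rabs (y - l) < eps)) as [d Hd].
{ exists eps. intros y Hy. exact Hy. }
exists d. intros x Hx. apply Hd; [|lra]. rbg. rewrite Rabs_right; lra.
Qed.

Lemma eps_lim_left (H : R -> R) a l : filterlim H (at_left a) (locally l) ->
  forall eps : posreal, exists d : posreal, forall x, a - d < x < a -> Rabs (H x - l) < eps.
Proof.
intros Hl eps. destruct (Hl (fun y => Rabs (y - l) < eps)) as [d Hd].
{ exists eps. intros y Hy. exact Hy. }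
exists d. intros x Hx. apply Hd; [|lra]. rbg. rewrite Rabs_left; lra.
Qed.

Lemma mono_right (H : R -> R) (a c B : R) : a < c ->
  (forall x y, a < x <= y -> y <= c -> H y <= H x) ->
  (forall x, a < x <= c -> H x <= B) ->
  exists l, filterlim H (at_right a) (locally l) /\ (forall x, a < x <= c -> H x <= l).
Proof.
intros Hac Hmon HB.
set (E := fun y => exists x, a < x <= c /\ y = H x).
destruct (completeness E) as [l [Hub Hlub]].
{ exists B. intros y [x [Hx ->]]. now apply HB. }
{ exists (H c). exists c. split; [lra|auto]. }
exists l. split.
- apply lim_right_eps. intros eps.
  destruct (Rlt_dec (l - eps) (H c)) as [Hc|Hc].
  + exists (mkposreal (c - a) ltac:(lra)). simpl. intros x Hx.
    assert (H x <= l) by (apply Hub; exists x; split; [lra|auto]).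
    assert (H c <= H x) by (apply Hmon; lra).
    rewrite Rabs_left1; lra.
  + assert (exists x0, a < x0 <= c /\ l - eps < H x0) as [x0 [Hx0 Hlx]].
    { apply Classical_Prop.NNPP. intros Hn.
      assert (l <= l - eps); [|destruct eps; simpl in *; lra].
      apply Hlub. intros y [x [Hx ->]].
      apply Rnot_lt_le. intros Hl. apply Hn. exists x. auto. }
    exists (mkposreal (x0 - a) ltac:(lra)). simpl. intros x Hx.
    assert (H x <= l) by (apply Hub; exists x; split; [lra|auto]).
    assert (H x0 <= H x) by (apply Hmon; lra).
    rewrite Rabs_left1; lra.
- intros x Hx. apply Hub. exists x. auto.
Qed.

Lemma mono_inf (H : R -> R) (c B : R) :
  (forall x y, c <= x <= y -> H x <= H y) ->
  (forall x, c <= x -> H x <= B) ->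
  exists l, filterlim H (Rbar_locally p_infty) (locally l) /\ (forall x, c <= x -> H x <= l).
Proof.
intros Hmon HB.
set (E := fun y => exists x, c <= x /\ y = H x).
destruct (completeness E) as [l [Hub Hlub]].
{ exists B. intros y [x [Hx ->]]. now apply HB. }
{ exists (H c). exists c. split; [lra|auto]. }
exists l. split.
- apply lim_inf_eps. intros eps.
  assert (exists x0, c <= x0 /\ l - eps < H x0) as [x0 [Hx0 Hlx]].
  { apply Classical_Prop.NNPP. intros Hn.
    assert (l <= l - eps); [|destruct eps; simpl in *; lra].
    apply Hlub. intros y [x [Hx ->]].
    apply Rnot_lt_le. intros Hl. apply Hn. exists x. auto. }
  exists x0. intros x Hx.
  assert (H x <= l) by (apply Hub; exists x; split; [lra|auto]).
  assert (H x0 <= H x) by (apply Hmon; lra).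
  rewrite Rabs_left1; lra.
- intros x Hx. apply Hub. exists x. auto.
Qed.

Lemma igen_right (f : R -> R) (a b l : R) : a < b ->
  (forall x, a < x <= b -> ex_RInt f x b) ->
  filterlim (fun x => RInt f x b) (at_right a) (locally l) ->
  is_RInt_gen f (at_right a) (at_point b) l.
Proof.
intros Hab Hex Hlim P HP.
apply Filter_prod with (Q := fun x => a < x <= b /\ P (RInt f x b)) (R := fun y => y = b).
- apply filter_and.
  + exists (mkposreal (b - a) ltac:(lra)). intros y Hy Hay. rbh Hy. simpl in Hy.
    apply Rabs_lt_between in Hy. lra.
  + now apply Hlim.
- reflexivity.
- intros x y [Hx HPx] ->. exists (RInt f x b). split; [apply (RInt_correct f); auto|auto].
Qed.

Lemma igen_inf (f : R -> R) (a l : R) :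
  (forall y, a <= y -> ex_RInt f a y) ->
  filterlim (fun y => RInt f a y) (Rbar_locally p_infty) (locally l) ->
  is_RInt_gen f (at_point a) (Rbar_locally p_infty) l.
Proof.
intros Hex Hlim P HP.
apply Filter_prod with (Q := fun x => x = a) (R := fun y => a <= y /\ P (RInt f a y)).
- reflexivity.
- apply filter_and.
  + exists a. intros; lra.
  + now apply Hlim.
- intros x y -> [Hy HPy]. exists (RInt f a y). split; [apply (RInt_correct f); auto|auto].
Qed.

Lemma igen_left (f : R -> R) (a b l : R) : a < b ->
  (forall y, a <= y < b -> ex_RInt f a y) ->
  filterlim (fun y => RInt f a y) (at_left b) (locally l) ->
  is_RInt_gen f (at_point a) (at_left b) l.
Proof.
intros Hab Hex Hlim P HP.
apply Filter_prod with (Q := fun x => x = a) (R := fun y => a <= y < b /\ P (RInt f a y)).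
- reflexivity.
- apply filter_and.
  + exists (mkposreal (b - a) ltac:(lra)). intros y Hy Hay. rbh Hy. simpl in Hy.
    apply Rabs_lt_between in Hy. lra.
  + now apply Hlim.
- intros x y -> [Hy HPy]. exists (RInt f a y). split; [apply (RInt_correct f); auto|auto].
Qed.

Lemma gen_right_lim (f : R -> R) (a b l : R) :
  is_RInt_gen f (at_right a) (at_point b) l ->
  at_right a (fun x => ex_RInt f x b) /\ filterlim (fun x => RInt f x b) (at_right a) (locally l).
Proof.
intros H. split.
- destruct (H (fun _ => True)) as [Q R HQ HR HQR]. { apply filter_true. }
  apply filter_imp with (2 := HQ). intros x Qx. destruct (HQR x b Qx HR) as [y [Hy _]].
  exists y. exact Hy.
- intros P HP. destruct (H P HP) as [Q R HQ HR HQR].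
  apply filter_imp with (2 := HQ). intros x Qx. destruct (HQR x b Qx HR) as [y [Hy Py]].
  simpl in Hy. now rewrite (is_RInt_unique _ _ _ _ Hy).
Qed.

Lemma exR_Ch1 (f : R -> R) a b c : a <= b <= c -> ex_RInt f a c -> ex_RInt f a b.
Proof. apply (@ex_RInt_Chasles_1 R_CompleteNormedModule). Qed.
Lemma exR_Ch2 (f : R -> R) a b c : a <= b <= c -> ex_RInt f a c -> ex_RInt f b c.
Proof. apply (@ex_RInt_Chasles_2 R_CompleteNormedModule). Qed.
Lemma RInt_Ch (f : R -> R) a b c : ex_RInt f a b -> ex_RInt f b c -> (RInt f a b : R) + (RInt f b c : R) = (RInt f a c : R).
Proof. apply (@RInt_Chasles R_CompleteNormedModule). Qed.
Lemma exR_cont (f : R -> R) a b : (forall z, Rmin a b <= z <= Rmax a b -> continuous f z) -> ex_RInt f a b.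
Proof. apply (@ex_RInt_continuous R_CompleteNormedModule). Qed.
Lemma RIc (f : R -> R) a b : ex_RInt f a b -> is_RInt f a b (RInt f a b).
Proof. apply (@RInt_correct R_CompleteNormedModule). Qed.
Lemma RInt_minus_const (f : R -> R) a b c : ex_RInt f a b ->
  @eq R (RInt (fun x => f x - c) a b) (RInt f a b - c * (b - a)).
Proof.
intros H.
pose proof (@RInt_minus R_CompleteNormedModule f (fun _ => c) a b H (@ex_RInt_const R_CompleteNormedModule a b c)) as E.
rewrite (@RInt_const R_CompleteNormedModule) in E. unfold minus, plus, opp, scal in E; simpl in E; unfold mult in E; simpl in E.
transitivity (RInt f a b + - ((b - a) * c)); [|ring].
rewrite <- E. apply RInt_ext. intros; unfold minus, plus, opp; simpl; ring.
Qed.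
Lemma exR_minus_const (f : R -> R) a b c : ex_RInt f a b -> ex_RInt (fun x => f x - c) a b.
Proof.
intros H. apply (@ex_RInt_minus R_CompleteNormedModule f (fun _ => c)); auto.
apply (@ex_RInt_const R_CompleteNormedModule).
Qed.

Lemma exp_mono (x y : R) : x <= y -> exp x <= exp y.
Proof. intros [H|H]. apply Rlt_le, exp_increasing, H. subst; lra. Qed.

Lemma Rpower_cont (q x : R) : 0 < x -> continuous (fun s => Rpower s q) x.
Proof. intros Hx. unfold Rpower. apply (@ex_derive_continuous R_AbsRing R_NormedModule). auto_derive. lra. Qed.

Lemma Rpower_pos' (s q : R) : 0 < Rpower s q.
Proof. unfold Rpower. apply exp_pos. Qed.

Lemma Rpower_le1 (s q : R) : 0 < s <= 1 -> 0 <= q -> Rpower s q <= 1.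
Proof.
intros Hs Hq. unfold Rpower. rewrite <- exp_0. apply exp_mono.
assert (ln s <= 0) by (rewrite <- ln_1; apply ln_le; lra). nra.
Qed.

Lemma Rpower_le_id (s q : R) : 1 <= s -> q <= 1 -> Rpower s q <= s.
Proof.
intros Hs Hq. unfold Rpower. rewrite <- (exp_ln s) at 2 by lra. apply exp_mono.
assert (0 <= ln s) by (rewrite <- ln_1; apply ln_le; lra). nra.
Qed.

Lemma exp_big (s : R) : 0 < s -> s * s <= 4 * exp s.
Proof.
intros Hs. replace s with (s/2 + s/2) at 3 by field. rewrite exp_plus.
pose proof (exp_ineq1_le (s/2)). nra.
Qed.

Definition f3 (q s : R) := Rpower s q * exp (- s).

Lemma f3_cont q x : 0 < x -> continuous (f3 q) x.
Proof. intros Hx. unfold f3, Rpower. apply (@ex_derive_continuous R_AbsRing R_NormedModule). auto_derive. lra. Qed.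

Lemma f3_ex q x y : 0 < x -> x <= y -> ex_RInt (f3 q) x y.
Proof.
intros Hx Hxy. apply (@ex_RInt_continuous R_CompleteNormedModule). intros z Hz. apply f3_cont.
rewrite Rmin_left in Hz by lra. lra.
Qed.

Lemma f3_nonneg q s : 0 <= f3 q s.
Proof. unfold f3. pose proof (Rpower_pos' s q). pose proof (exp_pos (-s)). nra. Qed.

Lemma Gamma3_ex (q : R) : 0 < q < 1 ->
  exists g, is_RInt_gen (f3 q) (at_right 0) (Rbar_locally p_infty) g /\ 0 <= g.
Proof.
intros Hq.
destruct (mono_right (fun x => RInt (f3 q) x 1) 0 1 1) as [l0 [Hl0 Hl0b]].
{ lra. }
{ intros x y Hxy Hy. rewrite <- (RInt_Chasles (f3 q) x y 1) by (apply f3_ex; lra).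
  assert (0 <= RInt (f3 q) x y); [|unfold plus; simpl; lra].
  apply RInt_ge_0; [lra| apply f3_ex; lra | intros; apply f3_nonneg]. }
{ intros x Hx. eapply Rle_trans. apply Rle_abs.
  eapply Rle_trans. apply abs_RInt_le_const with (M := 1); [lra| apply f3_ex; lra|].
  - intros t Ht. rewrite Rabs_right by (apply Rle_ge, f3_nonneg). unfold f3.
    pose proof (Rpower_le1 t q ltac:(lra) ltac:(lra)). pose proof (Rpower_pos' t q).
    assert (exp (-t) <= 1) by (rewrite <- exp_0; apply exp_mono; lra). nra.
  - lra. }
set (F := fun t => - ((t + 1) * exp (- t))).
assert (HF : forall y, 1 <= y -> RInt (fun t => t * exp (- t)) 1 y = F y - F 1).
{ intros y Hy. apply is_RInt_unique.
  apply (is_RInt_derive F (fun t => t * exp (-t))).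
  - intros x _. unfold F. auto_derive; auto. ring.
  - intros x _. apply (@ex_derive_continuous R_AbsRing R_NormedModule). auto_derive. auto. }
destruct (mono_inf (fun y => RInt (f3 q) 1 y) 1 1) as [l1 [Hl1 Hl1b]].
{ intros x y Hxy. rewrite <- (RInt_Chasles (f3 q) 1 x y) by (apply f3_ex; lra).
  assert (0 <= RInt (f3 q) x y); [|unfold plus; simpl; lra].
  apply RInt_ge_0; [lra| apply f3_ex; lra | intros; apply f3_nonneg]. }
{ intros y Hy. eapply Rle_trans.
  apply RInt_le with (g := fun t => t * exp (- t)); [lra| apply f3_ex; lra| |].
  - apply (@ex_RInt_continuous R_CompleteNormedModule). intros; apply (@ex_derive_continuous R_AbsRing R_NormedModule); auto_derive; auto.
  - intros x Hx. unfold f3. apply Rmult_le_compat_r. apply Rlt_le, exp_pos.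
    apply Rpower_le_id; lra.
  - rewrite HF by lra. unfold F. 
    assert (0 < (y+1) * exp (-y)) by (pose proof (exp_pos (-y)); nra).
    assert (exp (- (1)) <= /2).
    { pose proof (exp_ineq1_le 1). rewrite exp_Ropp. 
      apply Rinv_le_contravar; lra. }
    lra. }
exists (l0 + l1). split.
- apply (@is_RInt_gen_Chasles R_NormedModule _ _ _ _ (f3 q) 1 l0 l1).
  + apply igen_right; [lra| intros; apply f3_ex; lra| exact Hl0].
  + apply igen_inf; [intros; apply f3_ex; lra| exact Hl1].
- assert (E0 : RInt (f3 q) 1 1 = 0) by apply (RInt_point 1 (f3 q)).
  assert (0 <= l0). { rewrite <- E0. apply Hl0b. lra. }
  assert (0 <= l1). { rewrite <- E0. apply Hl1b. lra. }
  lra.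
Qed.

Lemma locally_pos (x : R) : 0 < x -> locally x (fun y => 0 < y).
Proof.
intros Hx. exists (mkposreal x Hx). intros y Hy. rbh Hy. simpl in Hy.
apply Rabs_lt_between in Hy. lra.
Qed.

Lemma Rpower_small (q eps : R) : 0 < q -> 0 < eps ->
  exists d : posreal, forall s, 0 < s < d -> Rpower s q < eps.
Proof.
intros Hq He. assert (0 < Rmin 1 (exp (ln eps / q))).
{ apply Rmin_glb_lt; [lra| apply exp_pos]. }
exists (mkposreal _ H). simpl. intros s Hs.
assert (s < exp (ln eps / q)) by (eapply Rlt_le_trans; [apply Hs| apply Rmin_r]).
unfold Rpower. rewrite <- (exp_ln eps) by lra. apply exp_increasing.
apply ln_increasing in H0; [|lra]. rewrite ln_exp in H0.
apply (Rmult_lt_compat_l q) in H0; [|lra]. field_simplify in H0; lra.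
Qed.

Definition FF (q s : R) := - (Rpower s q * exp (- s)).

Lemma FF_derive q s : 0 < s ->
  is_derive (FF q) s (f3 q s - q * (Rpower s (q - 1) * exp (- s))).
Proof.
intros Hs. unfold FF, f3, Rpower. auto_derive; [lra|].
replace ((q - 1) * ln s) with (q * ln s + - ln s) by ring.
rewrite exp_plus, (exp_Ropp (ln s)), exp_ln by lra. field. lra.
Qed.

Lemma Gamma2_ex (q g : R) : 0 < q < 1 ->
  is_RInt_gen (f3 q) (at_right 0) (Rbar_locally p_infty) g ->
  is_RInt_gen (fun s => Rpower s (q - 1) * exp (- s)) (at_right 0) (Rbar_locally p_infty) (g / q).
Proof.
intros Hq H3.
assert (HD : is_RInt_gen (Derive (FF q)) (at_right 0) (Rbar_locally p_infty) (0 - 0)).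
{ apply is_RInt_gen_Derive.
  - apply Filter_prod with (Q := fun a => 0 < a) (R := fun b => 0 < b).
    + exists (mkposreal 1 Rlt_0_1). intros; auto.
    + exists 0. auto.
    + intros a b Ha Hb x Hx. simpl in Hx. exists (f3 q x - q * (Rpower x (q - 1) * exp (- x))).
      apply FF_derive. assert (0 < Rmin a b) by (apply Rmin_glb_lt; auto). lra.
  - apply Filter_prod with (Q := fun a => 0 < a) (R := fun b => 0 < b).
    + exists (mkposreal 1 Rlt_0_1). intros; auto.
    + exists 0. auto.
    + intros a b Ha Hb x Hx. simpl in Hx. assert (0 < Rmin a b) by (apply Rmin_glb_lt; auto).
      apply continuous_ext_loc with (g := fun s => f3 q s - q * (Rpower s (q - 1) * exp (- s))).
      * apply filter_imp with (2 := locally_pos x ltac:(lra)). intros y Hy.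
        symmetry. apply is_derive_unique, FF_derive; auto.
      * unfold f3, Rpower. apply (@ex_derive_continuous R_AbsRing R_NormedModule). auto_derive. lra.
  - apply lim_right_eps. intros eps.
    destruct (Rpower_small q eps ltac:(lra) (cond_pos eps)) as [d Hd].
    exists (mkposreal (Rmin d 1) ltac:(apply Rmin_glb_lt; [apply cond_pos|lra])). simpl.
    intros x Hx. rewrite Rplus_0_l in Hx. assert (x < d) by (eapply Rlt_le_trans; [apply Hx| apply Rmin_l]).
    assert (x < 1) by (eapply Rlt_le_trans; [apply Hx| apply Rmin_r]).
    unfold FF. rewrite Rminus_0_r, Rabs_Ropp, Rabs_right.
    + pose proof (Hd x ltac:(lra)). pose proof (Rpower_pos' x q).
      assert (exp (- x) <= 1) by (rewrite <- exp_0; apply exp_mono; lra). nra.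
    + pose proof (Rpower_pos' x q). pose proof (exp_pos (- x)). nra.
  - apply lim_inf_eps. intros eps. exists (Rmax 1 (4 / eps)). intros x Hx.
    assert (1 < x) by (eapply Rle_lt_trans; [apply Rmax_l|apply Hx]).
    assert (4 / eps < x) by (eapply Rle_lt_trans; [apply Rmax_r|apply Hx]).
    unfold FF. rewrite Rminus_0_r, Rabs_Ropp, Rabs_right.
    + pose proof (Rpower_le_id x q ltac:(lra) ltac:(lra)).
      pose proof (exp_big x ltac:(lra)). rewrite exp_Ropp.
      pose proof (exp_pos x). pose proof (cond_pos eps). pose proof (Rpower_pos' x q).
      set (u := / exp x). assert (Hu : u * exp x = 1) by (unfold u; field; lra).
      assert (0 < u) by (unfold u; apply Rinv_0_lt_compat; lra).
      set (v := / x). assert (Hv : v * x = 1) by (unfold v; field; lra).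
      assert (0 < v) by (unfold v; apply Rinv_0_lt_compat; lra).
      assert (x * u <= 4 * v).
      { assert (HX : x * x * (u * v) <= 4 * exp x * (u * v)) by (apply Rmult_le_compat_r; nra).
        replace (x * x * (u * v)) with ((x * u) * (v * x)) in HX by ring.
        replace (4 * exp x * (u * v)) with (4 * v * (u * exp x)) in HX by ring.
        rewrite Hu, Hv in HX. lra. }
      assert (4 * v < eps).
      { assert (HY : 4 * / eps * eps < x * eps) by (apply Rmult_lt_compat_r; lra).
        replace (4 * / eps * eps) with 4 in HY by (field; lra).
        assert (HZ : 4 * v * x < eps * x) by (replace (4 * v * x) with 4 by (rewrite Rmult_assoc, Hv; ring); lra).
        apply Rmult_lt_reg_r in HZ; lra. }
      apply Rle_lt_trans with (x * u); [|lra]. apply Rmult_le_compat_r; lra.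
    + pose proof (Rpower_pos' x q). pose proof (exp_pos (- x)). nra. }
pose proof (@is_RInt_gen_scal R_NormedModule _ _ _ _ _ (/ q) _
  (@is_RInt_gen_minus R_NormedModule _ _ _ _ _ _ _ _ H3 HD)) as HH.
replace (g / q) with (scal (/ q) (minus g (0 - 0))).
2:{ unfold scal, minus, plus, opp; simpl. unfold mult; simpl. field. lra. }
eapply is_RInt_gen_ext; [|exact HH].
apply Filter_prod with (Q := fun a => 0 < a) (R := fun b => 0 < b).
+ exists (mkposreal 1 Rlt_0_1). intros; auto.
+ exists 0. auto.
+ intros a b Ha Hb x Hx. simpl in Hx. assert (0 < Rmin a b) by (apply Rmin_glb_lt; auto).
  rewrite (is_derive_unique _ _ _ (FF_derive q x ltac:(lra))).
  unfold scal, minus, plus, opp; simpl. unfold mult; simpl. unfold f3. field. lra.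
Qed.

Definition ceps (lo hi : R) (f : R -> R) := forall x, lo <= x <= hi -> forall eps, 0 < eps ->
  exists d, 0 < d /\ forall y, lo <= y <= hi -> Rabs (y - x) < d -> Rabs (f y - f x) < eps.

Lemma ceps_of_on lo hi f : continuous_on (fun x => lo <= x <= hi) f -> ceps lo hi f.
Proof.
intros Hc x Hx eps He.
destruct (Hc x Hx (fun z => Rabs (z - f x) < eps)) as [d Hd].
{ exists (mkposreal eps He). intros y Hy. exact Hy. }
exists d. split; [apply cond_pos|]. intros y Hy Hxy. apply Hd; auto.
Qed.

Lemma ceps_of_cont lo hi f : (forall x, continuous f x) -> ceps lo hi f.
Proof.
intros Hc x Hx eps He.
destruct (Hc x (fun z => Rabs (z - f x) < eps)) as [d Hd].
{ exists (mkposreal eps He). intros y Hy. exact Hy. }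
exists d. split; [apply cond_pos|]. intros y Hy Hxy. apply Hd; auto.
Qed.

Lemma cont_of_eps f x : (forall eps, 0 < eps -> exists d, 0 < d /\ forall y, Rabs (y - x) < d -> Rabs (f y - f x) < eps) ->
  continuous f x.
Proof.
intros H P [e HP]. destruct (H e (cond_pos e)) as [d [Hd Hd']].
exists (mkposreal d Hd). intros y Hy. apply HP. rbg. apply Hd'. exact Hy.
Qed.

Lemma ceps_sub lo hi lo' hi' f : lo <= lo' -> hi' <= hi -> ceps lo hi f -> ceps lo' hi' f.
Proof.
intros H1 H2 Hc x Hx eps He. destruct (Hc x ltac:(lra) eps He) as [d [Hd Hd']].
exists d. split; auto. intros y Hy. apply Hd'. lra.
Qed.

Lemma ceps_plus lo hi f g : ceps lo hi f -> ceps lo hi g -> ceps lo hi (fun x => f x + g x).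
Proof.
intros Hf Hg x Hx eps He.
destruct (Hf x Hx (eps/2) ltac:(lra)) as [d1 [Hd1 Hf']].
destruct (Hg x Hx (eps/2) ltac:(lra)) as [d2 [Hd2 Hg']].
exists (Rmin d1 d2). split; [apply Rmin_glb_lt; auto|]. intros y Hy Hxy.
assert (Rabs (y - x) < d1) by (eapply Rlt_le_trans; [apply Hxy|apply Rmin_l]).
assert (Rabs (y - x) < d2) by (eapply Rlt_le_trans; [apply Hxy|apply Rmin_r]).
specialize (Hf' y Hy H). specialize (Hg' y Hy H0).
replace (f y + g y - (f x + g x)) with ((f y - f x) + (g y - g x)) by ring.
eapply Rle_lt_trans; [apply Rabs_triang|]. lra.
Qed.

Lemma ceps_scal lo hi c f : ceps lo hi f -> ceps lo hi (fun x => c * f x).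
Proof.
intros Hf x Hx eps He.
destruct (Hf x Hx (eps / (Rabs c + 1))) as [d [Hd Hf']].
{ apply Rdiv_lt_0_compat; auto. pose proof (Rabs_pos c); lra. }
exists d. split; auto. intros y Hy Hxy. specialize (Hf' y Hy Hxy).
replace (c * f y - c * f x) with (c * (f y - f x)) by ring. rewrite Rabs_mult.
pose proof (Rabs_pos c). pose proof (Rabs_pos (f y - f x)).
apply Rle_lt_trans with ((Rabs c + 1) * Rabs (f y - f x)); [nra|].
apply Rmult_lt_reg_l with (/ (Rabs c + 1)). apply Rinv_0_lt_compat; lra.
replace (/ (Rabs c + 1) * ((Rabs c + 1) * Rabs (f y - f x))) with (Rabs (f y - f x)) by (field; lra).
replace (/ (Rabs c + 1) * eps) with (eps / (Rabs c + 1)) by (field; lra). exact Hf'.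
Qed.

Lemma ceps_shift lo hi c f : ceps lo hi f -> ceps (lo - c) (hi - c) (fun x => f (x + c)).
Proof.
intros Hf x Hx eps He. destruct (Hf (x + c) ltac:(lra) eps He) as [d [Hd Hf']].
exists d. split; auto. intros y Hy Hxy. apply Hf'. lra. replace (y + c - (x + c)) with (y - x) by ring. auto.
Qed.

Definition clampf (lo hi x : R) := Rmax lo (Rmin hi x).

Lemma clampf_in lo hi x : lo <= hi -> lo <= clampf lo hi x <= hi.
Proof. intros H. unfold clampf. split; [apply Rmax_l|]. apply Rmax_lub; [lra|apply Rmin_l]. Qed.

Lemma clampf_id lo hi x : lo <= x <= hi -> clampf lo hi x = x.
Proof. intros H. unfold clampf. rewrite Rmin_right by lra. rewrite Rmax_right by lra. auto. Qed.

Lemma clampf_lip lo hi x y : lo <= hi -> Rabs (clampf lo hi y - clampf lo hi x) <= Rabs (y - x).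
Proof.
intros H. unfold clampf, Rmax, Rmin.
destruct (Rle_dec hi y), (Rle_dec hi x), (Rle_dec lo hi), (Rle_dec lo y), (Rle_dec lo x);
  try (apply Rabs_le; split; apply Rabs_le_between' || idtac; unfold Rabs; destruct Rcase_abs; lra);
  unfold Rabs; repeat destruct Rcase_abs; lra.
Qed.

Lemma clamp_cont lo hi f : lo <= hi -> ceps lo hi f -> forall x, continuous (fun y => f (clampf lo hi y)) x.
Proof.
intros Hlh Hf x. apply cont_of_eps. intros eps He.
destruct (Hf (clampf lo hi x) (clampf_in lo hi x Hlh) eps He) as [d [Hd Hf']].
exists d. split; auto. intros y Hy. apply Hf'. apply clampf_in; auto.
eapply Rle_lt_trans; [apply clampf_lip; auto| auto].
Qed.

Lemma MVT_c lo hi f df a b : lo <= a <= b -> b <= hi -> ceps lo hi f ->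
  (forall x, lo < x < hi -> is_derive f x (df x)) ->
  exists c, a <= c <= b /\ f b - f a = df c * (b - a).
Proof.
intros Hab Hbh Hf Hd.
destruct (MVT_gen (fun y => f (clampf lo hi y)) a b df) as [c [Hc Heq]].
- intros x Hx. rewrite Rmin_left in Hx by lra. rewrite Rmax_right in Hx by lra.
  apply is_derive_ext_loc with (f := f); [|apply Hd; lra].
  exists (mkposreal (Rmin (x - lo) (hi - x)) ltac:(apply Rmin_glb_lt; lra)). intros y Hy.
  rbh Hy. simpl in Hy. apply Rabs_lt_between in Hy.
  assert (Rmin (x - lo) (hi - x) <= x - lo) by apply Rmin_l.
  assert (Rmin (x - lo) (hi - x) <= hi - x) by apply Rmin_r.
  rewrite clampf_id; auto. lra.
- intros x _. apply continuity_pt_filterlim. apply (clamp_cont lo hi f); [lra|auto].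
- rewrite Rmin_left in Hc by lra. rewrite Rmax_right in Hc by lra.
  exists c. split; auto. rewrite !clampf_id in Heq by lra. auto.
Qed.

Lemma cont_eps f a : continuous f a -> forall eps, 0 < eps -> exists d, 0 < d /\
  forall y, Rabs (y - a) < d -> Rabs (f y - f a) < eps.
Proof.
intros Hc eps He. destruct (Hc (fun z => Rabs (z - f a) < eps)) as [d Hd].
{ exists (mkposreal eps He). intros y Hy. exact Hy. }
exists d. split; [apply cond_pos|]. intros y Hy. apply Hd. exact Hy.
Qed.

Lemma Phi_exists (T L : R) (v2 v3 : R -> R) : 0 < T ->
  ceps 0 T v2 ->
  (forall x, 0 < x < T -> is_derive v2 x (v3 x)) ->
  continuous_on (fun x => 0 < x <= T) v3 ->
  is_RInt_gen (fun s => Rabs (v3 s)) (at_right 0) (at_point T) L ->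
  exists Phi : R -> R,
    (forall a b, 0 < a -> a <= b -> b <= T ->
       ex_RInt (fun s => Rabs (v3 s)) a b /\ Phi b - Phi a = RInt (fun s => Rabs (v3 s)) a b) /\
    Phi 0 = 0 /\
    (forall a b, 0 <= a -> a <= b -> b <= T -> Phi a <= Phi b) /\
    (forall a, 0 <= a < T -> forall eps, 0 < eps -> exists d, 0 < d /\
        forall x, a < x < a + d -> Rabs (Phi x - Phi a) < eps) /\
    (forall a b, 0 <= a -> a <= b -> b <= T -> Rabs (v2 b - v2 a) <= Phi b - Phi a).
Proof.
intros HT Hv2 Hd2 Hc3 Hint.
set (A3 := fun s => Rabs (v3 s)).
destruct (gen_right_lim A3 0 T L Hint) as [[d0 Hd0] Hlim].
assert (HexA : forall a, 0 < a <= T -> ex_RInt A3 a T).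
{ intros a Ha. set (x := Rmin a (d0 / 2)).
  assert (0 < x) by (apply Rmin_glb_lt; [lra| pose proof (cond_pos d0); lra]).
  assert (x <= a) by apply Rmin_l. assert (x <= d0/2) by apply Rmin_r.
  apply exR_Ch2 with x; [lra|]. apply Hd0; auto.
  rbg. rewrite Rminus_0_r, Rabs_right by lra. pose proof (cond_pos d0); lra. }
assert (HexAB : forall a b, 0 < a -> a <= b -> b <= T -> ex_RInt A3 a b).
{ intros a b Ha Hab HbT. apply exR_Ch1 with T; [lra|]. apply HexA; lra. }
assert (Hpos : forall a b, 0 < a -> a <= b -> b <= T -> 0 <= RInt A3 a b).
{ intros a b Ha Hab HbT. apply RInt_ge_0; auto. intros; apply Rabs_pos. }
set (Phi := fun x => if Rlt_dec 0 x then L - RInt A3 x T else 0).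
assert (P1 : forall a b, 0 < a -> a <= b -> b <= T -> Phi b - Phi a = RInt A3 a b).
{ intros a b Ha Hab HbT. unfold Phi. destruct (Rlt_dec 0 a); [|lra]. destruct (Rlt_dec 0 b); [|lra].
  rewrite <- (RInt_Ch A3 a b T) by (apply HexAB; lra). ring. }
assert (P0 : Phi 0 = 0). { unfold Phi. destruct (Rlt_dec 0 0); lra. }
assert (HL : forall b, 0 < b <= T -> RInt A3 b T <= L).
{ intros b Hb. apply Rnot_lt_le. intros Hlt.
  destruct (eps_lim_right _ _ _ Hlim (mkposreal _ (Rgt_minus _ _ Hlt))) as [d Hd].
  simpl in Hd. set (x := Rmin b d / 2).
  assert (0 < Rmin b d) by (apply Rmin_glb_lt; [lra|apply cond_pos]).
  assert (Rmin b d <= b) by apply Rmin_l. assert (Rmin b d <= d) by apply Rmin_r.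
  specialize (Hd x ltac:(unfold x; lra)).
  assert (RInt A3 b T <= RInt A3 x T).
  { rewrite <- (RInt_Ch A3 x b T) by (apply HexAB; unfold x; lra).
    pose proof (Hpos x b ltac:(unfold x; lra) ltac:(unfold x; lra) ltac:(lra)). lra. }
  apply Rabs_lt_between in Hd. lra. }
assert (P2 : forall a b, 0 <= a -> a <= b -> b <= T -> Phi a <= Phi b).
{ intros a b Ha Hab HbT. destruct (Rlt_dec 0 a).
  - pose proof (Hpos a b r Hab HbT). rewrite <- P1 in H by auto. lra.
  - assert (a = 0) by lra. subst a. rewrite P0. unfold Phi. destruct (Rlt_dec 0 b); [|lra].
    pose proof (HL b ltac:(lra)). lra. }
assert (P3 : forall a, 0 <= a < T -> forall eps, 0 < eps -> exists d, 0 < d /\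
        forall x, a < x < a + d -> Rabs (Phi x - Phi a) < eps).
{ intros a Ha eps He. destruct (Rlt_dec 0 a).
  - assert (Hc : continuous (fun z => RInt A3 z T) a).
    { apply (continuous_RInt_2 A3 a T (fun z => RInt A3 z T)).
      exists (mkposreal (Rmin a (T - a)) ltac:(apply Rmin_glb_lt; lra)). intros y Hy.
      rbh Hy. simpl in Hy. apply Rabs_lt_between in Hy.
      assert (Rmin a (T - a) <= a) by apply Rmin_l. assert (Rmin a (T - a) <= T - a) by apply Rmin_r.
      apply (RInt_correct A3). apply HexA. lra. }
    destruct (cont_eps _ _ Hc eps He) as [d [Hd Hd']].
    exists d. split; auto. intros x Hx. unfold Phi. destruct (Rlt_dec 0 x); [|lra].
    destruct (Rlt_dec 0 a); [|lra].
    replace (L - RInt A3 x T - (L - RInt A3 a T)) with (- (RInt A3 x T - RInt A3 a T)) by ring.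
    rewrite Rabs_Ropp. apply Hd'. rewrite Rabs_right; lra.
  - assert (a = 0) by lra. subst a.
    destruct (eps_lim_right _ _ _ Hlim (mkposreal eps He)) as [d Hd]. simpl in Hd.
    exists d. split; [apply cond_pos|]. intros x Hx. rewrite P0. unfold Phi.
    destruct (Rlt_dec 0 x); [|lra]. rewrite Rminus_0_r.
    replace (L - RInt A3 x T) with (- (RInt A3 x T - L)) by ring. rewrite Rabs_Ropp. apply Hd. lra. }
assert (V1 : forall a b, 0 < a -> a <= b -> b < T -> Rabs (v2 b - v2 a) <= Phi b - Phi a).
{ intros a b Ha Hab HbT. rewrite P1 by lra.
  assert (Hi : is_RInt v3 a b (minus (v2 b) (v2 a))).
  { apply (is_RInt_derive v2 v3 a b).
    - intros x Hx. rewrite Rmin_left in Hx by lra. rewrite Rmax_right in Hx by lra. apply Hd2. lra.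
    - intros x Hx. rewrite Rmin_left in Hx by lra. rewrite Rmax_right in Hx by lra.
      apply continuous_continuous_on with (D := fun x => 0 < x <= T); auto.
      exists (mkposreal (Rmin x (T - x)) ltac:(apply Rmin_glb_lt; lra)). intros y Hy.
      rbh Hy. simpl in Hy. apply Rabs_lt_between in Hy.
      assert (Rmin x (T - x) <= x) by apply Rmin_l. assert (Rmin x (T - x) <= T - x) by apply Rmin_r. lra. }
  replace (v2 b - v2 a) with (RInt v3 a b).
  - apply abs_RInt_le; auto. exists (minus (v2 b) (v2 a)). auto.
  - rewrite (is_RInt_unique _ _ _ _ Hi). reflexivity. }
assert (V2 : forall a b, 0 < a -> a <= b -> b <= T -> Rabs (v2 b - v2 a) <= Phi b - Phi a).
{ intros a b Ha Hab HbT. destruct (Rlt_dec b T); [apply V1; auto|].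
  assert (b = T) by lra. subst b. destruct (Req_dec a T).
  { subst. rewrite !Rminus_diag, Rabs_R0. lra. }
  apply Rnot_lt_le. intros Hlt.
  destruct (Hv2 T ltac:(lra) _ (Rgt_minus _ _ Hlt)) as [d [Hd Hd']].
  set (y := Rmax ((a + T) / 2) (T - d / 2)).
  assert ((a + T) / 2 <= y) by apply Rmax_l. assert (T - d / 2 <= y) by apply Rmax_r.
  assert (y < T) by (unfold y; apply Rmax_lub_lt; lra).
  assert (Rabs (y - T) < d).
  { rewrite Rabs_left by lra. unfold y, Rmax. destruct (Rle_dec _ _); lra. }
  specialize (Hd' y ltac:(lra) H3). pose proof (V1 a y Ha ltac:(lra) H2).
  pose proof (P2 y T ltac:(lra) ltac:(lra) ltac:(lra)).
  pose proof (Rabs_triang (v2 y - v2 a) (v2 T - v2 y)).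
  replace (v2 y - v2 a + (v2 T - v2 y)) with (v2 T - v2 a) in H6 by ring. rewrite Rabs_minus_sym in Hd'. lra. }
exists Phi. split.
{ intros a b Ha Hab HbT. split; [apply HexAB; auto| apply P1; auto]. }
split; [auto|]. split; [auto|]. split; [auto|].
intros a b Ha Hab HbT. destruct (Rlt_dec 0 a); [apply V2; auto|].
assert (a = 0) by lra. subst a. destruct (Req_dec b 0).
{ subst. rewrite !Rminus_diag, Rabs_R0. lra. }
rewrite P0. apply Rnot_lt_le. intros Hlt.
destruct (Hv2 0 ltac:(lra) _ (Rgt_minus _ _ Hlt)) as [d [Hd Hd']].
set (y := Rmin (b / 2) (d / 2)).
assert (y <= b / 2) by apply Rmin_l. assert (y <= d / 2) by apply Rmin_r.
assert (0 < y) by (apply Rmin_glb_lt; lra).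
specialize (Hd' y ltac:(lra) ltac:(rewrite Rminus_0_r, Rabs_right; lra)).
pose proof (V2 y b H2 ltac:(lra) HbT). pose proof (P2 0 y ltac:(lra) ltac:(lra) ltac:(lra)).
rewrite P0 in H4.
pose proof (Rabs_triang (v2 b - v2 y) (v2 y - v2 0)).
replace (v2 b - v2 y + (v2 y - v2 0)) with (v2 b - v2 0) in H5 by ring. lra.
Qed.

Lemma der_plus (f g : R -> R) x a b : is_derive f x a -> is_derive g x b ->
  is_derive (fun y => f y + g y) x (a + b).
Proof. intros. apply (@is_derive_plus R_AbsRing R_NormedModule); auto. Qed.

Lemma der_shift (f : R -> R) x c a : is_derive f (x + c) a -> is_derive (fun y => f (y + c)) x a.
Proof.
intros H. replace a with (scal 1 a) by (unfold scal; simpl; unfold mult; simpl; ring).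
apply (is_derive_comp f (fun y => y + c) x a 1); auto.
auto_derive; auto.
Qed.

Lemma der_ext (f g : R -> R) x a : (forall y, f y = g y) -> is_derive f x a -> is_derive g x a.
Proof. intros E H. eapply is_derive_ext; [apply E|exact H]. Qed.

Lemma der_eq (f : R -> R) x a b : a = b -> is_derive f x a -> is_derive f x b.
Proof. intros ->; auto. Qed.

Lemma second_diff (T tau a : R) (v v1 v2 : R -> R) : 0 < tau -> 0 <= a -> a + 2 * tau <= T ->
  ceps 0 T v -> ceps 0 T v1 ->
  (forall x, 0 < x < T -> is_derive v x (v1 x)) ->
  (forall x, 0 < x < T -> is_derive v1 x (v2 x)) ->
  exists xi, a <= xi <= a + 2 * tau /\
    v (a + 2 * tau) - 2 * v (a + tau) + v a = tau ^ 2 * v2 xi.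
Proof.
intros Ht Ha HaT Hv Hv1 Hd Hd1.
set (g := fun x => v (x + tau) + (-1) * v x).
assert (Hg : ceps 0 (T - tau) g).
{ apply ceps_plus.
  - apply ceps_sub with (0 - tau) (T - tau); [lra|lra|]. apply ceps_shift; auto.
  - apply ceps_scal. apply ceps_sub with 0 T; [lra|lra|auto]. }
destruct (MVT_c 0 (T - tau) g (fun x => v1 (x + tau) + (-1) * v1 x) a (a + tau)) as [c [Hc Hceq]];
  [lra|lra|auto| |].
{ intros x Hx. unfold g. apply der_plus.
  - apply der_shift. apply Hd. lra.
  - apply is_derive_scal. apply Hd. lra. }
destruct (MVT_c 0 T v1 v2 c (c + tau)) as [xi [Hxi Hxieq]]; [lra|lra|auto|auto|].
exists xi. split; [lra|]. unfold g in Hceq.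
replace (a + tau + tau) with (a + 2 * tau) in Hceq by ring.
assert (E1 : v1 (c + tau) + -1 * v1 c = v2 xi * tau) by (replace (c + tau - c) with tau in Hxieq by ring; lra).
rewrite E1 in Hceq. replace (a + tau - a) with tau in Hceq by ring.
replace (tau ^ 2 * v2 xi) with (v2 xi * tau * tau) by ring. lra.
Qed.

Lemma first_step (T tau c : R) (v v1 v2 : R -> R) : 0 < tau -> tau <= T ->
  ceps 0 T v -> ceps 0 T v1 ->
  (forall x, 0 < x < T -> is_derive v x (v1 x)) ->
  (forall x, 0 < x < T -> is_derive v1 x (v2 x)) ->
  exists x1 x2, 0 <= x2 <= x1 /\ x1 <= tau /\
    v tau - v 0 - tau * v1 0 - c * tau ^ 2 / 2 = (v2 x2 - c) * x1 * tau.
Proof.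
intros Ht HtT Hv Hv1 Hd Hd1.
set (m := fun x => v x + (- v 0 - x * v1 0 - c * x ^ 2 / 2)).
assert (Hm : ceps 0 T m).
{ apply ceps_plus; auto. apply ceps_of_cont. intros x.
  apply (@ex_derive_continuous R_AbsRing R_NormedModule). auto_derive. auto. }
destruct (MVT_c 0 T m (fun x => v1 x + (- v1 0 - c * x)) 0 tau) as [x1 [Hx1 Hx1eq]];
  [lra|lra|auto| |].
{ intros x Hx. unfold m. apply der_plus; [apply Hd; lra|].
  auto_derive; auto. field. }
set (p := fun x => v1 x + (- c * x)).
assert (Hp : ceps 0 T p).
{ apply ceps_plus; auto. apply ceps_of_cont. intros x.
  apply (@ex_derive_continuous R_AbsRing R_NormedModule). auto_derive. auto. }
destruct (MVT_c 0 T p (fun x => v2 x + (- c)) 0 x1) as [x2 [Hx2 Hx2eq]];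
  [lra|lra|auto| |].
{ intros x Hx. unfold p. apply der_plus; [apply Hd1; lra|].
  auto_derive; auto. ring. }
exists x1, x2. split; [lra|]. split; [lra|]. unfold m in Hx1eq. unfold p in Hx2eq.
replace (v1 x1 + (- v1 0 - c * x1)) with ((v2 x2 + - c) * (x1 - 0)) in Hx1eq by lra.
replace (tau - 0) with tau in Hx1eq by ring.
replace ((v2 x2 + - c) * (x1 - 0) * tau) with ((v2 x2 - c) * x1 * tau) in Hx1eq by ring.
rewrite <- Hx1eq. field.
Qed.

Definition rtf (q r : R) := if Rlt_dec 0 r then Rpower r (/ q) else 0.
Definition pwf (q x : R) := if Rlt_dec 0 x then Rpower x q else 0.

Lemma rtf_cont q r : 0 < q -> continuous (rtf q) r.
Proof.
intros Hq. destruct (Rlt_dec 0 r) as [Hr|Hr].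
- apply continuous_ext_loc with (g := fun s => Rpower s (/ q)).
  + apply filter_imp with (2 := locally_pos r Hr). intros y Hy. unfold rtf.
    destruct (Rlt_dec 0 y); [auto|lra].
  + apply Rpower_cont; auto.
- apply cont_of_eps. intros eps He.
  destruct (Rpower_small (/ q) eps ltac:(apply Rinv_0_lt_compat; lra) He) as [d Hd].
  exists d. split; [apply cond_pos|]. intros y Hy. unfold rtf.
  destruct (Rlt_dec 0 r); [lra|]. destruct (Rlt_dec 0 y) as [Hy0|Hy0].
  + rewrite Rminus_0_r. rewrite Rabs_right by (apply Rle_ge, Rlt_le, Rpower_pos').
    apply Hd. split; auto. apply Rabs_lt_between in Hy. lra.
  + rewrite Rminus_0_r, Rabs_R0. auto.
Qed.

Lemma rtf_pwf q x : 0 < q -> 0 <= x -> rtf q (pwf q x) = x.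
Proof.
intros Hq Hx. unfold pwf. destruct (Rlt_dec 0 x).
- unfold rtf. destruct (Rlt_dec 0 (Rpower x q)) as [H|H]; [|pose proof (Rpower_pos' x q); lra].
  rewrite Rpower_mult. replace (q * / q) with 1 by (field; lra). apply Rpower_1; auto.
- unfold rtf. destruct (Rlt_dec 0 0); lra.
Qed.

Lemma pwf_nonneg q x : 0 <= pwf q x.
Proof. unfold pwf. destruct (Rlt_dec 0 x); [apply Rlt_le, Rpower_pos'|lra]. Qed.

Lemma pwf_mono q x y : 0 < q -> 0 <= x <= y -> pwf q x <= pwf q y.
Proof.
intros Hq Hxy. unfold pwf. destruct (Rlt_dec 0 x), (Rlt_dec 0 y); try lra.
- apply Rle_Rpower_l; lra.
- apply Rlt_le, Rpower_pos'.
Qed.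

Lemma rtf_mono q x y : 0 < q -> x <= y -> rtf q x <= rtf q y.
Proof.
intros Hq Hxy. unfold rtf. destruct (Rlt_dec 0 x), (Rlt_dec 0 y); try lra.
- apply Rle_Rpower_l; [apply Rlt_le, Rinv_0_lt_compat|]; lra.
- apply Rlt_le, Rpower_pos'.
Qed.

Definition hf (T q : R) (v2 : R -> R) (r : R) := v2 (clampf 0 T (T - rtf q r)).

Lemma hf_cont T q v2 r : 0 < T -> 0 < q -> ceps 0 T v2 -> continuous (hf T q v2) r.
Proof.
intros HT Hq Hv. unfold hf.
apply (continuous_comp (fun r => T - rtf q r) (fun z => v2 (clampf 0 T z))).
- apply (@continuous_minus R_UniformSpace R_AbsRing R_NormedModule (fun _ => T) (rtf q)).
  + apply continuous_const.
  + apply rtf_cont; auto.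
- apply clamp_cont; [lra|auto].
Qed.

Lemma hf_val T q v2 s : 0 < q -> 0 <= s <= T -> hf T q v2 (pwf q (T - s)) = v2 s.
Proof.
intros Hq Hs. unfold hf. rewrite rtf_pwf by lra. rewrite clampf_id by lra. f_equal. ring.
Qed.

Lemma hf_ex T q v2 a b : 0 < T -> 0 < q -> ceps 0 T v2 -> ex_RInt (hf T q v2) a b.
Proof. intros. apply exR_cont. intros. apply hf_cont; auto. Qed.

Lemma caputo_sub T q beta v2 x y : 0 < T -> 0 < q < 1 -> q = 2 - beta -> ceps 0 T v2 ->
  0 <= x <= y -> y < T ->
  is_RInt (caputo_integrand beta v2 T) x y
    (/ q * RInt (hf T q v2) (pwf q (T - y)) (pwf q (T - x))).
Proof.
intros HT Hq Hqb Hv Hxy HyT.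
set (g := fun s => Rpower (T - s) q).
set (dg := fun s => - q * Rpower (T - s) (q - 1)).
assert (Hc := is_RInt_comp (hf T q v2) g dg x y).
assert (Hg : forall s, s < T -> g s = pwf q (T - s)).
{ intros s Hs. unfold g, pwf. destruct (Rlt_dec 0 (T - s)); [auto|lra]. }
assert (HH : is_RInt (fun s => scal (dg s) (hf T q v2 (g s))) x y (RInt (hf T q v2) (g x) (g y))).
{ apply Hc.
  - intros s _. apply hf_cont; auto; lra.
  - intros s Hs. rewrite Rmin_left in Hs by lra. rewrite Rmax_right in Hs by lra. split.
    + unfold g, dg, Rpower. auto_derive; [lra|].
      replace ((q - 1) * ln (T - s)) with (q * ln (T - s) + - ln (T - s)) by ring.
      rewrite exp_plus, (exp_Ropp (ln (T - s))), exp_ln by lra. replace (T + - s) with (T - s) by ring. field. lra.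
    + unfold dg, Rpower. apply (@ex_derive_continuous R_AbsRing R_NormedModule). auto_derive. lra. }
apply (is_RInt_scal _ _ _ (- / q)) in HH.
apply (is_RInt_ext _ (caputo_integrand beta v2 T)) in HH.
- replace (/ q * RInt (hf T q v2) (pwf q (T - y)) (pwf q (T - x)))
    with (scal (- / q) (RInt (hf T q v2) (g x) (g y))); auto.
  rewrite (Hg x) by lra. rewrite (Hg y) by lra. rewrite <- (opp_RInt_swap (hf T q v2)) by (apply hf_ex; auto; lra).
  unfold scal, opp; simpl. unfold mult; simpl. ring.
- intros s Hs. rewrite Rmin_left in Hs by lra. rewrite Rmax_right in Hs by lra.
  unfold scal; simpl. unfold mult; simpl. rewrite Hg by lra. rewrite hf_val by lra.
  unfold caputo_integrand, dg. replace (1 - beta) with (q - 1) by lra. field. lra.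
Qed.

Lemma caputo_gen T q beta v2 : 0 < T -> 0 < q < 1 -> q = 2 - beta -> ceps 0 T v2 ->
  is_RInt_gen (caputo_integrand beta v2 T) (at_right 0) (at_left T)
    (/ q * RInt (hf T q v2) 0 (pwf q T)).
Proof.
intros HT Hq Hqb Hv P [eps HP].
set (F := fun w => RInt (hf T q v2) 0 w).
assert (HF : forall b, continuous F b).
{ intros b. apply (continuous_RInt_1 (hf T q v2) 0 b F).
  apply filter_forall. intros z. apply (RInt_correct (hf T q v2)). apply hf_ex; auto; lra. }
set (e' := eps * q / 2).
assert (He' : 0 < e') by (unfold e'; pose proof (cond_pos eps); nra).
destruct (cont_eps F (pwf q T) (HF _) e' He') as [d1 [Hd1 Hd1']].
assert (Hgc : continuous (fun x => Rpower (T - x) q) 0).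
{ unfold Rpower. apply (@ex_derive_continuous R_AbsRing R_NormedModule). auto_derive. lra. }
destruct (cont_eps _ _ Hgc d1 Hd1) as [d1' [Hd1p Hd1p']].
destruct (cont_eps F 0 (HF _) e' He') as [d2 [Hd2 Hd2']].
destruct (Rpower_small q d2 ltac:(lra) Hd2) as [d2' Hd2p].
apply Filter_prod with (Q := fun x => 0 < x < Rmin (T / 2) d1')
  (R := fun y => T - Rmin (T / 2) d2' < y < T).
- exists (mkposreal (Rmin (T / 2) d1') ltac:(apply Rmin_glb_lt; lra)). intros x Hx Hx0.
  rbh Hx. simpl in Hx. rewrite Rminus_0_r in Hx. apply Rabs_lt_between in Hx. lra.
- assert (0 < Rmin (T / 2) d2') by (apply Rmin_glb_lt; [lra|apply cond_pos]).
  exists (mkposreal _ H). intros y Hy Hy0. rbh Hy. simpl in Hy. apply Rabs_lt_between in Hy. lra.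
- intros x y Hx Hy. simpl.
  assert (Rmin (T / 2) d1' <= T / 2) by apply Rmin_l. assert (Rmin (T / 2) d1' <= d1') by apply Rmin_r.
  assert (Rmin (T / 2) d2' <= T / 2) by apply Rmin_l. assert (Rmin (T / 2) d2' <= d2') by apply Rmin_r.
  eexists. split. apply (caputo_sub T q beta v2 x y); auto; lra.
  apply HP. rbg.
  assert (Hpx : pwf q (T - x) = Rpower (T - x) q) by (unfold pwf; destruct (Rlt_dec 0 (T - x)); lra).
  assert (Hpy : pwf q (T - y) = Rpower (T - y) q) by (unfold pwf; destruct (Rlt_dec 0 (T - y)); lra).
  assert (HpT : pwf q T = Rpower (T - 0) q) by (unfold pwf; destruct (Rlt_dec 0 T); [f_equal; ring|lra]).
  assert (E : F (pwf q (T - x)) - F (pwf q (T - y)) = RInt (hf T q v2) (pwf q (T - y)) (pwf q (T - x))).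
  { unfold F. rewrite <- (RInt_Ch (hf T q v2) 0 (pwf q (T - y)) (pwf q (T - x))) by (apply hf_ex; auto; lra). ring. }
  assert (F0 : F 0 = 0) by (unfold F; apply (RInt_point 0 (hf T q v2))).
  rewrite <- E.
  assert (A1 : Rabs (F (pwf q (T - x)) - F (pwf q T)) < e').
  { apply Hd1'. rewrite Hpx, HpT. apply Hd1p'. rewrite Rminus_0_r, Rabs_right; lra. }
  assert (A2 : Rabs (F (pwf q (T - y)) - F 0) < e').
  { apply Hd2'. rewrite Rminus_0_r, Hpy, Rabs_right by (apply Rle_ge, Rlt_le, Rpower_pos').
    apply Hd2p. lra. }
  replace (/ q * (F (pwf q (T - x)) - F (pwf q (T - y))) - / q * RInt (hf T q v2) 0 (pwf q T))
    with (/ q * ((F (pwf q (T - x)) - F (pwf q T)) - (F (pwf q (T - y)) - F 0))).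
  2:{ rewrite F0. unfold F. ring. }
  rewrite Rabs_mult, Rabs_right by (apply Rle_ge, Rlt_le, Rinv_0_lt_compat; lra).
  eapply Rle_lt_trans. apply Rmult_le_compat_l. apply Rlt_le, Rinv_0_lt_compat; lra.
  apply Rabs_triang. rewrite Rabs_Ropp.
  apply Rlt_le_trans with (/ q * (e' + e')).
  + apply Rmult_lt_compat_l; [apply Rinv_0_lt_compat; lra| lra].
  + unfold e'. right. field. lra.
Qed.

Lemma comp_lin_R (f : R -> R) (u v a b l : R) : 0 < u ->
  is_RInt f (v + a * u) (v + b * u) l ->
  is_RInt (fun y => f (v + y * u)) a b (l / u).
Proof.
intros Hu H.
assert (H' : is_RInt f (u * a + v) (u * b + v) l).
{ replace (u * a + v) with (v + a * u) by ring. replace (u * b + v) with (v + b * u) by ring. auto. }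
apply (is_RInt_comp_lin f u v a b l) in H'.
apply (is_RInt_scal _ _ _ (/ u)) in H'.
replace (l / u) with (scal (/ u) l) by (unfold scal; simpl; unfold mult; simpl; field; lra).
apply (is_RInt_ext _ _ _ _ _ ltac:(intros; reflexivity)) in H'.
eapply is_RInt_ext; [|exact H'].
intros x _. unfold scal; simpl; unfold mult; simpl. replace (u * x + v) with (v + x * u) by ring. field. lra.
Qed.

Lemma Ik_val (tau : R) (n j : nat) (v3 Phi : R -> R) : 0 < tau -> (j < n)%nat ->
  (forall a b, 0 < a -> a <= b -> b <= INR n * tau ->
       ex_RInt (fun s => Rabs (v3 s)) a b /\ Phi b - Phi a = RInt (fun s => Rabs (v3 s)) a b) ->
  (forall a, 0 <= a < INR n * tau -> forall eps, 0 < eps -> exists d, 0 < d /\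
        forall x, a < x < a + d -> Rabs (Phi x - Phi a) < eps) ->
  Ik tau v3 j = (Phi (INR (S j) * tau) - Phi (INR j * tau)) / tau.
Proof.
intros Ht Hjn P1 P3.
assert (Hj : INR (S j) <= INR n) by (apply le_INR; lia).
rewrite S_INR in Hj |- *. pose proof (pos_INR j) as Hj0.
set (tj := INR j * tau). set (tj1 := (INR j + 1) * tau).
assert (Htj1 : tj1 = tj + 1 * tau) by (unfold tj, tj1; ring).
assert (HtjT : tj1 <= INR n * tau) by (unfold tj1; apply Rmult_le_compat_r; lra).
assert (Htj0 : 0 <= tj) by (unfold tj; apply Rmult_le_pos; lra).
unfold Ik. apply is_RInt_gen_unique.
apply igen_right; [lra| |].
- intros x Hx. destruct (P1 (tj + x * tau) tj1 ltac:(nra) ltac:(nra) HtjT) as [Hex _].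
  rewrite Htj1 in Hex. apply RIc in Hex.
  eexists. apply (comp_lin_R (fun s => Rabs (v3 s)) tau tj x 1 _ Ht Hex).
- apply lim_right_eps. intros eps.
  destruct (P3 tj ltac:(split; lra) (eps * tau) ltac:(pose proof (cond_pos eps); nra)) as [d [Hd Hd']].
  exists (mkposreal (Rmin 1 (d / tau)) ltac:(apply Rmin_glb_lt; [lra| apply Rdiv_lt_0_compat; lra])).
  simpl. intros x Hx.
  assert (Rmin 1 (d / tau) <= 1) by apply Rmin_l. assert (Rmin 1 (d / tau) <= d / tau) by apply Rmin_r.
  destruct (P1 (tj + x * tau) tj1 ltac:(nra) ltac:(nra) HtjT) as [Hex HE].
  rewrite Htj1 in Hex. apply RIc in Hex.
  cbv beta. fold tj. rewrite (is_RInt_unique _ _ _ _ (comp_lin_R (fun s => Rabs (v3 s)) tau tj x 1 _ Ht Hex)).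
  rewrite <- Htj1, <- HE.
  replace ((Phi tj1 - Phi (tj + x * tau)) / tau - (Phi tj1 - Phi tj) / tau)
    with (- (Phi (tj + x * tau) - Phi tj) / tau) by (field; lra).
  unfold Rdiv. rewrite Rabs_mult, Rabs_Ropp, (Rabs_right (/ tau)) by (apply Rle_ge, Rlt_le, Rinv_0_lt_compat; lra).
  apply (Rmult_lt_reg_r tau); [lra|]. rewrite Rmult_assoc, Rinv_l, Rmult_1_r by lra.
  apply Hd'. split; [nra|].
  assert (x * tau < d / tau * tau) by (apply Rmult_lt_compat_r; lra).
  replace (d / tau * tau) with d in H1 by (field; lra). lra.
Qed.

Lemma sum1_0 (f : nat -> R) : @eq R (sum_n_m f 1 0) 0.
Proof. exact (sum_n_m_zero f 1 0 ltac:(lia)). Qed.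

Lemma sum1_S (f : nat -> R) m : @eq R (sum_n_m f 1 (S m)) (sum_n_m f 1 m + f (S m)).
Proof. rewrite sum_n_Sm by lia. reflexivity. Qed.

Lemma sum_split1 (f : nat -> R) n : (1 <= n)%nat -> @eq R (sum_n_m f 1 n) (f 1%nat + sum_n_m f 2 n).
Proof.
intros Hn. rewrite (sum_n_m_Chasles f 1 1 n) by lia. rewrite sum_n_n. reflexivity.
Qed.

Lemma sum_ext1 (f g : nat -> R) n : (forall k, (1 <= k <= n)%nat -> f k = g k) ->
  sum_n_m f 1 n = sum_n_m g 1 n.
Proof. intros H. apply sum_n_m_ext_loc. auto. Qed.

Lemma sum_le1 (f g : nat -> R) n : (forall k, (1 <= k <= n)%nat -> f k <= g k) ->
  sum_n_m f 1 n <= sum_n_m g 1 n.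
Proof.
induction n; intros H.
- rewrite !sum1_0. lra.
- rewrite !sum1_S. apply Rplus_le_compat; [apply IHn; intros; apply H; lia| apply H; lia].
Qed.

Lemma sum_abs1 (f : nat -> R) n : Rabs (sum_n_m f 1 n) <= sum_n_m (fun k => Rabs (f k)) 1 n.
Proof.
induction n.
- rewrite !sum1_0, Rabs_R0. lra.
- rewrite !sum1_S. eapply Rle_trans; [apply Rabs_triang|]. lra.
Qed.

Lemma sum_minus1 (f g : nat -> R) n : @eq R (sum_n_m (fun k => f k - g k) 1 n) (sum_n_m f 1 n - sum_n_m g 1 n).
Proof.
induction n.
- rewrite !sum1_0. ring.
- rewrite !sum1_S, IHn. ring.
Qed.

Lemma sum_scal1 (c : R) (f : nat -> R) n : @eq R (sum_n_m (fun k => c * f k) 1 n) (c * sum_n_m f 1 n).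
Proof.
induction n.
- rewrite !sum1_0. ring.
- rewrite !sum1_S, IHn. ring.
Qed.

Lemma sum_tele1 (r : nat -> R) n : @eq R (sum_n_m (fun k => r (k - 1)%nat - r k) 1 n) (r 0%nat - r n).
Proof.
induction n.
- rewrite sum1_0. ring.
- rewrite sum1_S, IHn. replace (S n - 1)%nat with n by lia. ring.
Qed.

Lemma sum_RInt1 (h : R -> R) (r : nat -> R) n : (forall a b, ex_RInt h a b) ->
  @eq R (RInt h (r n) (r 0%nat)) (@sum_n_m R_AbelianMonoid (fun k => RInt h (r k) (r (k - 1)%nat)) 1 n).
Proof.
intros Hex. induction n.
- rewrite sum1_0. apply (RInt_point (r 0%nat) h).
- rewrite sum1_S, <- IHn. replace (S n - 1)%nat with n by lia.
  rewrite <- (RInt_Ch h (r (S n)) (r n) (r 0%nat)) by auto. ring.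
Qed.

Definition ak (tau : R) (v v1 : R -> R) (k : nat) :=
  if Nat.eqb k 1 then 2 * (v tau - v 0 - tau * v1 0) / tau ^ 2
  else (v (INR k * tau) - 2 * v (INR (k - 1) * tau) + v (INR (k - 2) * tau)) / tau ^ 2.

Lemma Rpower_2 (x : R) : 0 < x -> Rpower x 2 = x ^ 2.
Proof. intros Hx. replace 2 with (INR 2) by (simpl; ring). apply Rpower_pow; auto. Qed.

Lemma key_B (beta tau : R) (n k : nat) : 1 < beta < 2 -> 0 < tau -> (1 <= k <= n)%nat ->
  bcoef beta (n - k) * Rpower tau (2 - beta) =
  / Gamma (3 - beta) * (pwf (2 - beta) (INR n * tau - INR (k - 1) * tau) - pwf (2 - beta) (INR n * tau - INR k * tau)).
Proof.
intros Hb Ht Hk.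
assert (E1 : INR n * tau - INR (k - 1) * tau = (INR (n - k) + 1) * tau).
{ rewrite !minus_INR by lia. simpl. ring. }
assert (E2 : INR n * tau - INR k * tau = INR (n - k) * tau).
{ rewrite !minus_INR by lia. ring. }
rewrite E1, E2. destruct (n - k)%nat as [|m] eqn:Em.
- simpl. unfold pwf. destruct (Rlt_dec 0 ((0 + 1) * tau)); [|lra]. destruct (Rlt_dec 0 (0 * tau)); [lra|].
  replace ((0 + 1) * tau) with tau by ring. ring.
- unfold bcoef. pose proof (pos_INR (S m)). pose proof (lt_0_INR (S m) ltac:(lia)).
  unfold pwf. destruct (Rlt_dec 0 ((INR (S m) + 1) * tau)); [|nra].
  destruct (Rlt_dec 0 (INR (S m) * tau)); [|nra].
  rewrite <- !Rpower_mult_distr by lra. ring.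
Qed.

Lemma delta_identity (beta tau : R) (n : nat) (v v1 : R -> R) : 1 < beta < 2 -> 0 < tau -> (1 <= n)%nat ->
  Delta_op beta tau v n - 2 * bcoef beta (n - 1) / Rpower tau (beta - 1) * v1 0
  = / Gamma (3 - beta) * sum_n_m (fun k => ak tau v v1 k *
      (pwf (2 - beta) (INR n * tau - INR (k - 1) * tau) - pwf (2 - beta) (INR n * tau - INR k * tau))) 1 n.
Proof.
intros Hb Ht Hn.
assert (KP : / Rpower tau beta = Rpower tau (2 - beta) / tau ^ 2).
{ unfold Rminus. rewrite Rpower_plus, Rpower_Ropp, Rpower_2 by lra. field.
  split; [pose proof (Rpower_pos' tau beta); lra| lra]. }
assert (KP2 : / Rpower tau (beta - 1) = tau / Rpower tau beta).
{ unfold Rminus. rewrite Rpower_plus, Rpower_Ropp, Rpower_1 by lra. field.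
  split; [pose proof (Rpower_pos' tau beta); lra| lra]. }
set (W := fun k => pwf (2 - beta) (INR n * tau - INR (k - 1) * tau) - pwf (2 - beta) (INR n * tau - INR k * tau)).
set (G := Gamma (3 - beta)).
rewrite <- sum_scal1.
rewrite (sum_ext1 _ (fun k => ak tau v v1 k * (bcoef beta (n - k) * Rpower tau (2 - beta)))).
2:{ intros k Hk. unfold W, G. rewrite key_B by (auto; lia). ring. }
rewrite sum_split1 by auto.
unfold Delta_op. cbv zeta.
assert (S2 : @eq R (sum_n_m (fun k => ak tau v v1 k * (bcoef beta (n - k) * Rpower tau (2 - beta))) 2 n)
   (/ Rpower tau beta * sum_n_m (fun k => bcoef beta (n - k) * (v (INR k * tau) - 2 * v (INR (k - 1) * tau) + v (INR (k - 2) * tau))) 2 n)).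
{ rewrite <- (sum_n_m_mult_l (K := R_Ring)). apply sum_n_m_ext_loc. intros k Hk.
  unfold ak. destruct (Nat.eqb k 1) eqn:Ek; [apply Nat.eqb_eq in Ek; lia|].
  unfold mult; simpl. rewrite KP. field. lra. }
rewrite S2. unfold ak. simpl Nat.eqb. cbv iota.
replace (1 * tau) with tau by ring. replace (0 * tau) with 0 by ring.
replace (INR 1 * tau) with tau by (simpl; ring). replace (INR 0 * tau) with 0 by (simpl; ring).
unfold Rdiv. rewrite KP2. unfold Rdiv. rewrite !KP. field. lra.
Qed.

Lemma maxk_ge (f : nat -> R) m j : (j <= m)%nat -> f j <= maxk f m.
Proof.
induction m; intros Hj.
- replace j with 0%nat by lia. simpl. lra.
- simpl. destruct (Nat.eq_dec j (S m)) as [->|Hne].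
  + apply Rmax_r.
  + eapply Rle_trans; [apply IHm; lia| apply Rmax_l].
Qed.

Theorem lemma2 (beta tau : R) (n : nat) (v v1 v2 v3 : R -> R) :
  1 < beta < 2 -> 0 < tau -> (1 <= n)%nat ->
  let T := INR n * tau in
  continuous_on (fun x => 0 <= x <= T) v ->
  continuous_on (fun x => 0 <= x <= T) v1 ->
  continuous_on (fun x => 0 <= x <= T) v2 ->
  continuous_on (fun x => 0 < x <= T) v3 ->
  (forall x, 0 < x < T -> is_derive v x (v1 x)) ->
  (forall x, 0 < x < T -> is_derive v1 x (v2 x)) ->
  (forall x, 0 < x < T -> is_derive v2 x (v3 x)) ->
  ex_RInt_gen (fun s => Rabs (v3 s)) (at_right 0) (at_point T) ->
  ex_RInt_gen (caputo_integrand beta v2 T) (at_right 0) (at_left T) /\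
  Rabs (caputo beta v2 T
        - (Delta_op beta tau v n - 2 * bcoef beta (n - 1) / Rpower tau (beta - 1) * v1 0))
  <= 9 * Rpower T (2 - beta) / Gamma (3 - beta) * maxk (Ik tau v3) (n - 1) * tau.
Proof.
intros Hb Ht Hn T Hcv Hcv1 Hcv2 Hcv3 Hd Hd1 Hd2 Hint.
assert (Hq : 0 < 2 - beta < 1) by lra.
assert (HnR : 1 <= INR n) by (replace 1 with (INR 1) by reflexivity; apply le_INR; lia).
assert (HT : 0 < T) by (unfold T; nra).
assert (HtT : tau <= T) by (unfold T; nra).
pose proof (ceps_of_on 0 T v Hcv) as Hv.
pose proof (ceps_of_on 0 T v1 Hcv1) as Hv1.
pose proof (ceps_of_on 0 T v2 Hcv2) as Hv2.
destruct (Gamma3_ex (2 - beta) Hq) as [g3 [Hg3 Hg3pos]].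
assert (G3 : Gamma (3 - beta) = g3).
{ unfold Gamma. apply is_RInt_gen_unique. replace (3 - beta - 1) with (2 - beta) by ring. exact Hg3. }
assert (G2 : Gamma (2 - beta) = g3 / (2 - beta)).
{ unfold Gamma. apply is_RInt_gen_unique. replace (2 - beta - 1) with ((2 - beta) - 1) by ring.
  apply Gamma2_ex; auto. }
destruct Hint as [L HL].
destruct (Phi_exists T L v2 v3 HT Hv2 Hd2 Hcv3 HL) as [Phi [P1 [P0 [P2 [P3 P4]]]]].
assert (HC := caputo_gen T (2 - beta) beta v2 HT Hq eq_refl Hv2).
split. { eexists. exact HC. }
assert (Ecap : caputo beta v2 T = / g3 * RInt (hf T (2 - beta) v2) 0 (pwf (2 - beta) T)).
{ unfold caputo. rewrite G2. rewrite (is_RInt_gen_unique _ _ HC).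
  destruct (Req_dec g3 0) as [->|Hg0].
  - unfold Rdiv. rewrite Rmult_0_l, Rinv_0. ring.
  - field. lra. }
set (M := maxk (Ik tau v3) (n - 1)).
assert (HM : forall j, (j < n)%nat -> Phi (INR (S j) * tau) - Phi (INR j * tau) <= tau * M).
{ intros j Hj.
  pose proof (maxk_ge (Ik tau v3) (n - 1) j ltac:(lia)). fold M in H.
  rewrite (Ik_val tau n j v3 Phi Ht Hj P1 P3) in H.
  replace (Phi (INR (S j) * tau) - Phi (INR j * tau)) with (tau * ((Phi (INR (S j) * tau) - Phi (INR j * tau)) / tau)) by (field; lra).
  apply Rmult_le_compat_l; lra. }
assert (HM0 : 0 <= M).
{ pose proof (maxk_ge (Ik tau v3) (n - 1) 0 ltac:(lia)). fold M in H.
  rewrite (Ik_val tau n 0 v3 Phi Ht ltac:(lia) P1 P3) in H.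
  assert (Phi (INR 0 * tau) <= Phi (INR 1 * tau)).
  { apply P2; simpl; nra. }
  apply Rle_trans with ((Phi (INR 1 * tau) - Phi (INR 0 * tau)) / tau); auto.
  apply Rdiv_le_0_compat; lra. }
assert (Var : forall x y lo hi, 0 <= lo -> hi <= T -> lo <= x <= hi -> lo <= y <= hi ->
   Rabs (v2 x - v2 y) <= Phi hi - Phi lo).
{ intros x y lo hi Hlo Hhi Hx Hy. destruct (Rle_dec y x).
  - eapply Rle_trans. apply P4; lra. pose proof (P2 lo y ltac:(lra) ltac:(lra) ltac:(lra)).
    pose proof (P2 x hi ltac:(lra) ltac:(lra) ltac:(lra)). lra.
  - rewrite Rabs_minus_sym. eapply Rle_trans. apply P4; lra. pose proof (P2 lo x ltac:(lra) ltac:(lra) ltac:(lra)).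
    pose proof (P2 y hi ltac:(lra) ltac:(lra) ltac:(lra)). lra. }
assert (Loc : forall k, (1 <= k <= n)%nat -> forall s, INR (k - 1) * tau <= s <= INR k * tau ->
   Rabs (v2 s - ak tau v v1 k) <= 2 * tau * M).
{ intros k Hk s Hs. destruct (Nat.eqb k 1) eqn:Ek.
  - apply Nat.eqb_eq in Ek. subst k. unfold ak. rewrite Nat.eqb_refl. simpl in Hs.
    replace (0 * tau) with 0 in Hs by ring. replace (1 * tau) with tau in Hs by ring.
    destruct (first_step T tau (v2 s) v v1 v2 Ht HtT Hv Hv1 Hd Hd1) as [x1 [x2 [Hx2 [Hx1 E]]]].
    replace (v2 s - 2 * (v tau - v 0 - tau * v1 0) / tau ^ 2)
      with (- (2 * x1 / tau) * (v2 x2 - v2 s)).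
    2:{ replace (v tau - v 0 - tau * v1 0) with (v2 s * tau ^ 2 / 2 + (v2 x2 - v2 s) * x1 * tau) by lra.
        field. lra. }
    rewrite Rabs_mult, Rabs_Ropp, Rabs_right by (apply Rle_ge, Rdiv_le_0_compat; lra).
    pose proof (Var x2 s 0 tau ltac:(lra) HtT ltac:(lra) ltac:(lra)).
    pose proof (HM 0%nat ltac:(lia)). simpl in H0. replace (0 * tau) with 0 in H0 by ring.
    replace (1 * tau) with tau in H0 by ring.
    assert (2 * x1 / tau <= 2).
    { apply (Rmult_le_reg_r tau); [lra|]. replace (2 * x1 / tau * tau) with (2 * x1) by (field; lra). nra. }
    pose proof (Rabs_pos (v2 x2 - v2 s)).
    apply Rle_trans with (2 * Rabs (v2 x2 - v2 s)); [|lra].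
    apply Rmult_le_compat_r; auto.
  - pose proof Ek as Ek'. apply Nat.eqb_neq in Ek'. assert (Hk2 : (2 <= k)%nat) by lia.
    set (a := INR (k - 2) * tau).
    assert (E1 : INR k * tau = a + 2 * tau) by (unfold a; rewrite minus_INR by lia; simpl; ring).
    assert (E2 : INR (k - 1) * tau = a + tau) by (unfold a; rewrite !minus_INR by lia; simpl; ring).
    assert (E3 : INR (S (k - 1)) * tau = a + 2 * tau) by (unfold a; rewrite S_INR, !minus_INR by lia; simpl; ring).
    assert (E4 : INR (S (k - 2)) * tau = a + tau) by (unfold a; rewrite S_INR, !minus_INR by lia; simpl; ring).
    assert (Ha0 : 0 <= a) by (unfold a; apply Rmult_le_pos; [apply pos_INR|lra]).
    assert (HkT : INR k * tau <= T) by (unfold T; apply Rmult_le_compat_r; [lra|apply le_INR; lia]).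
    destruct (second_diff T tau a v v1 v2 Ht Ha0 ltac:(lra) Hv Hv1 Hd Hd1) as [xi [Hxi Exi]].
    unfold ak. rewrite Ek. fold a. rewrite E1, E2.
    rewrite Exi. replace (tau ^ 2 * v2 xi / tau ^ 2) with (v2 xi) by (field; lra).
    pose proof (Var s xi a (a + 2 * tau) Ha0 ltac:(lra) ltac:(lra) ltac:(lra)).
    pose proof (HM (k - 1)%nat ltac:(lia)). pose proof (HM (k - 2)%nat ltac:(lia)).
    rewrite E3, E2 in H0. rewrite E4 in H1. fold a in H1. lra. }
set (h := hf T (2 - beta) v2).
set (r := fun k : nat => pwf (2 - beta) (T - INR k * tau)).
assert (Hex : forall a b, ex_RInt h a b) by (intros; apply hf_ex; auto; lra).
assert (Hrk : forall k, (k <= n)%nat -> 0 <= T - INR k * tau /\ rtf (2 - beta) (r k) = T - INR k * tau).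
{ intros k Hk. assert (INR k <= INR n) by (apply le_INR; auto).
  assert (0 <= T - INR k * tau) by (unfold T; nra). split; auto.
  unfold r. apply rtf_pwf; auto; lra. }
assert (Term : forall k, (1 <= k <= n)%nat ->
  Rabs (RInt h (r k) (r (k - 1)%nat) - ak tau v v1 k * (r (k - 1)%nat - r k)) <= 2 * tau * M * (r (k - 1)%nat - r k)).
{ intros k Hk. destruct (Hrk k ltac:(lia)) as [Hk0 Hk0'].
  destruct (Hrk (k - 1)%nat ltac:(lia)) as [Hk1 Hk1'].
  assert (Hkk : INR (k - 1) * tau = INR k * tau - tau) by (rewrite minus_INR by lia; simpl; ring).
  assert (Hmono : r k <= r (k - 1)%nat).
  { unfold r. apply pwf_mono; [lra|]. lra. }
  rewrite <- RInt_minus_const by auto.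
  rewrite Rmult_comm. apply abs_RInt_le_const; auto. apply exR_minus_const; auto.
  intros rho Hrho. unfold h, hf.
  assert (A1 : rtf (2 - beta) (r k) <= rtf (2 - beta) rho) by (apply rtf_mono; lra).
  assert (A2 : rtf (2 - beta) rho <= rtf (2 - beta) (r (k - 1)%nat)) by (apply rtf_mono; lra).
  assert (0 <= INR (k - 1) * tau) by (apply Rmult_le_pos; [apply pos_INR|lra]).
  rewrite clampf_id by lra. apply Loc; auto. lra. }
rewrite Ecap, delta_identity by auto. rewrite G3.
assert (Rn : r n = 0).
{ unfold r. replace (T - INR n * tau) with 0 by (unfold T; ring). unfold pwf. destruct (Rlt_dec 0 0); lra. }
assert (R0 : r 0%nat = pwf (2 - beta) T) by (unfold r; simpl; f_equal; ring).
assert (R0' : pwf (2 - beta) T = Rpower T (2 - beta)) by (unfold pwf; destruct (Rlt_dec 0 T); lra).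
replace (RInt (hf T (2 - beta) v2) 0 (pwf (2 - beta) T)) with (RInt h (r n) (r 0%nat)) by (rewrite Rn, R0; reflexivity).
rewrite (sum_RInt1 h r n Hex).
rewrite (sum_ext1 (fun k => ak tau v v1 k * (pwf (2 - beta) (INR n * tau - INR (k - 1) * tau) - pwf (2 - beta) (INR n * tau - INR k * tau)))
   (fun k => ak tau v v1 k * (r (k - 1)%nat - r k))) by (intros; reflexivity).
rewrite <- Rmult_minus_distr_l, <- sum_minus1.
assert (Hg : 0 <= / g3).
{ destruct (Req_dec g3 0) as [->|Hg0]; [rewrite Rinv_0; lra| apply Rlt_le, Rinv_0_lt_compat; lra]. }
rewrite Rabs_mult, (Rabs_right (/ g3)) by lra.
assert (Sb : Rabs (sum_n_m (fun k => RInt h (r k) (r (k - 1)%nat) - ak tau v v1 k * (r (k - 1)%nat - r k)) 1 n)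
   <= 2 * tau * M * Rpower T (2 - beta)).
{ eapply Rle_trans. apply sum_abs1.
  eapply Rle_trans. apply sum_le1. apply Term.
  rewrite sum_scal1, sum_tele1, Rn, R0, R0'. lra. }
pose proof (Rpower_pos' T (2 - beta)).
apply Rle_trans with (/ g3 * (2 * tau * M * Rpower T (2 - beta))).
- apply Rmult_le_compat_l; auto.
- unfold Rdiv. replace (9 * Rpower T (2 - beta) * / g3 * M * tau) with (/ g3 * (9 * tau * M * Rpower T (2 - beta))) by ring.
  apply Rmult_le_compat_l; auto. assert (0 <= tau * M * Rpower T (2 - beta)) by (apply Rmult_le_pos; nra). nra.
Qed.
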